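(* Let $G$ be an abelian group and let $H$ be a uniformly fully inert subgroup of $G$. Then $H$ is commensurable with some fully invariant subgroup of $G$.
   Context: All groups are additively written abelian groups. A subgroup $F$ of $G$ is fully invariant if $\phi(F)\subseteq F$ for every endomorphism $\phi$ of $G$. A subgroup $S$ of $G$ is uniformly fully inert if there is a fixed positive integer $m$ such that the quotient $(\phi(S)+S)/S$ has at most $m$ elements for every endomorphism $\phi$ of $G$. Two subgroups $B,C$ of $G$ are commensurable if both $(B+C)/B$ and $(B+C)/C$ are finite. *)

(* Defs.v *)
From HB Require Import structures.
From mathcomp Require Import all_boot all_order all_algebra.
Set Implicit Arguments. Unset Strict Implicit. Unset Printing Implicit Defensive.
Import GRing.Theory.
Local Open Scope ring_scope.

Definition is_subgroup (G : zmodType) (S : G -> Prop) : Prop :=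
  S 0 /\ (forall x y, S x -> S y -> S (x - y)).

Definition sumset (G : zmodType) (A B : G -> Prop) : G -> Prop :=
  fun x => exists a b, A a /\ B b /\ x = a + b.

Definition imageset (G : zmodType) (phi : G -> G) (A : G -> Prop) : G -> Prop :=
  fun x => exists a, A a /\ x = phi a.

(* The quotient A/B (B a subgroup, B ⊆ A) has at most m elements:
   at most m elements of G represent every coset x + B with x in A. *)
Definition quot_card_le (G : zmodType) (A B : G -> Prop) (m : nat) : Prop :=
  exists s : seq G, (size s <= m)%N /\
    forall x, A x -> exists y, y \in s /\ B (x - y).

Definition quot_finite (G : zmodType) (A B : G -> Prop) : Prop :=
  exists m, quot_card_le A B m.

Definition fully_invariant (G : zmodType) (F : G -> Prop) : Prop :=
  forall (phi : {additive G -> G}) x, F x -> F (phi x).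

Definition uniformly_fully_inert (G : zmodType) (S : G -> Prop) : Prop :=
  exists m : nat, (0 < m)%N /\
    forall phi : {additive G -> G},
      quot_card_le (sumset (imageset phi S) S) S m.

Definition commensurable (G : zmodType) (B C : G -> Prop) : Prop :=
  quot_finite (sumset B C) B /\ quot_finite (sumset B C) C.

(* Main.v *)
Require Import Defs.
From HB Require Import structures.
From mathcomp Require Import all_boot all_order all_algebra.
From Stdlib Require Import Classical.
Set Implicit Arguments. Unset Strict Implicit. Unset Printing Implicit Defensive.
Import GRing.Theory.
Local Open Scope ring_scope.

Lemma sg0 (G : zmodType) (W : G -> Prop) : is_subgroup W -> W 0.
Proof. by case. Qed.

Lemma sgB (G : zmodType) (W : G -> Prop) x y : is_subgroup W -> W x -> W y -> W (x - y).
Proof. by case=> _ h; apply: h. Qed.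

Lemma sgN (G : zmodType) (W : G -> Prop) x : is_subgroup W -> W x -> W (- x).
Proof. move=> hW hx; rewrite -sub0r; apply: sgB => //; exact: sg0. Qed.

Lemma sgD (G : zmodType) (W : G -> Prop) x y : is_subgroup W -> W x -> W y -> W (x + y).
Proof. move=> hW hx hy; rewrite -[y]opprK; apply: sgB => //; exact: sgN. Qed.

Lemma sg_sym (G : zmodType) (W : G -> Prop) x y : is_subgroup W -> W (x - y) -> W (y - x).
Proof. by move=> hW h; rewrite -opprB; apply: sgN. Qed.

Lemma sg_tr (G : zmodType) (W : G -> Prop) a b c : is_subgroup W ->
  W (a - c) -> W (b - c) -> W (a - b).
Proof.
move=> hW h1 h2; have := sgB hW h1 h2.
by rewrite opprB addrA subrK.
Qed.

Lemma sg_tr2 (G : zmodType) (W : G -> Prop) a b c : is_subgroup W ->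
  W (a - b) -> W (b - c) -> W (a - c).
Proof. by move=> hW h1 h2; have := sgD hW h1 h2; rewrite addrA subrK. Qed.

Lemma alg1 (G : zmodType) (a b x y : G) : a - (x - y) = (a + b - x) - (b - y).
Proof. by rewrite !opprB !addrA [a + b - x]addrAC [a - x + b + y]addrAC addrK addrAC. Qed.
Lemma alg2 (G : zmodType) (a d : G) : a - (a - d) = d.
Proof. by rewrite opprB addrC subrK. Qed.

Lemma greedy (G : zmodType) (A E : G -> Prop) (Esym : forall a b, E (a - b) -> E (b - a)) k :
  (exists s : seq G, (size s <= k)%N /\ forall x, A x -> exists y, y \in s /\ E (x - y)) \/
  (exists L : seq G, size L = k.+1 /\ (forall x, x \in L -> A x) /\
     (forall i j, (i < size L)%N -> (j < size L)%N -> E (nth 0 L i - nth 0 L j) -> i = j)).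
Proof.
elim: k => [|k IH].
  case: (classic (exists x, A x)) => [[x Ax]|nA].
    right; exists [:: x]; split => //; split.
      by move=> y; rewrite inE => /eqP ->.
    by move=> [|i] [|j].
  left; exists [::]; split => // x Ax; exfalso; apply: nA; by exists x.
case: IH => [[s [hs hc]]|[L [hL [hA hp]]]].
  by left; exists s; split => //; apply: leqW.
case: (classic (forall x, A x -> exists y, y \in L /\ E (x - y))) => hc.
  by left; exists L; rewrite hL.
have [x hx] := not_all_ex_not _ _ hc.
have Ax : A x by apply: NNPP => nA; apply: hx => /nA.
have nE : forall y, y \in L -> ~ E (x - y).
  by move=> y yL hE; apply: hx => _; exists y.
right; exists (x :: L); split; first by rewrite /= hL.
split.
  by move=> y; rewrite inE => /orP [/eqP ->|]; [|apply: hA].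
move=> [|i] [|j] //= hi hj.
- move=> h; exfalso; apply: (nE (nth 0 L j)) => //; exact: mem_nth.
- move=> /Esym h; exfalso; apply: (nE (nth 0 L i)) => //; exact: mem_nth.
- by move=> h; congr S; apply: hp.
Qed.

Lemma PH (G : zmodType) (E : G -> Prop)
  (Etr : forall a b c, E (a - c) -> E (b - c) -> E (a - b)) (L s : seq G) :
  (forall i j, (i < size L)%N -> (j < size L)%N -> E (nth 0 L i - nth 0 L j) -> i = j) ->
  (forall x, x \in L -> exists y, y \in s /\ E (x - y)) -> (size L <= size s)%N.
Proof.
move=> hp hc.
have : forall i : 'I_(size L), exists j : 'I_(size s), E (nth 0 L i - nth 0 s j).
  move=> i; have [y [ys hy]] := hc _ (mem_nth 0 (ltn_ord i)).
  exists (Ordinal (etrans (index_mem y s) ys)); by rewrite /= nth_index.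
move=> /fin_all_exists [f hf].
have inj : injective f.
  move=> i j hij; apply: val_inj; apply: hp; try exact: ltn_ord.
  by apply: (Etr _ _ (nth 0 s (f i))); [apply: hf|rewrite hij; apply: hf].
by have := leq_card f inj; rewrite !card_ord.
Qed.

Lemma qtrans (G : zmodType) (A B C : G -> Prop) k1 k2 :
  quot_card_le A B k1 -> quot_card_le B C k2 -> quot_card_le A C (k1 * k2).
Proof.
move=> [s1 [h1 c1]] [s2 [h2 c2]].
exists [seq a + b | a <- s1, b <- s2]; split.
  by rewrite size_allpairs leq_mul.
move=> x Ax; have [y [ys By]] := c1 _ Ax; have [z [zs Cz]] := c2 _ By.
exists (y + z); split; first exact: allpairs_f.
by rewrite opprD addrA.
Qed.

Lemma qrefl (G : zmodType) (A B : G -> Prop) : is_subgroup B -> (forall x, A x -> B x) ->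
  quot_card_le A B 1.
Proof.
move=> hB hAB; exists [:: 0]; split => // x Ax; exists 0; split; first by rewrite inE.
by rewrite subr0; apply: hAB.
Qed.

Lemma main (G : zmodType) (n : nat) : forall X W : G -> Prop, is_subgroup X -> is_subgroup W ->
  (forall u : {additive G -> G}, quot_card_le (imageset u X) W n.+1) ->
  exists X' W' : G -> Prop, [/\ is_subgroup X', (forall x, X' x -> X x), quot_finite X X' &
     [/\ is_subgroup W', (forall x, W x -> W' x), quot_finite W' W &
     (forall (u : {additive G -> G}) x, X' x -> W' (u x))]].
Proof.
elim: n => [|n IH] X W hX hW hc.
  exists X, W; split => //; first by exists 1%N; apply: qrefl.
  split => //; first by exists 1%N; apply: qrefl.
  move=> u x Xx; have [s [hs cs]] := hc u.
  have [y [ys hy]] := cs (u x) (ex_intro _ x (conj Xx erefl)).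
  have [y' [ys' hy']] := cs 0 (ex_intro _ 0 (conj (sg0 hX) (esym (raddf0 u)))).
  have yy : y = y'.
    by move: s hs ys ys' {cs}; case=> [|a [|b t]] //= _; rewrite !inE => /eqP -> /eqP ->.
  subst y'; have := sg_tr hW hy hy'; by rewrite subr0.
case: (classic (forall u : {additive G -> G}, quot_card_le (imageset u X) W n.+1)) => hn.
  exact: IH.
have [u0 hu0] := not_all_ex_not _ _ hn.
have Wsym : forall a b, W (a - b) -> W (b - a) by move=> a b; apply: sg_sym.
have [[s0 [hs0 cs0]]|[L0 [hL0 [AL0 pL0]]]] := greedy (imageset u0 X) Wsym n.+1.
  by exfalso; apply: hu0; exists s0.
pose X0 := fun x => X x /\ W (u0 x).
pose W0 := fun y => exists x w, X x /\ W w /\ y = u0 x + w.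
have hX0 : is_subgroup X0.
  split; first by split; [apply: sg0|rewrite raddf0; apply: sg0].
  move=> x y [Xx Wx] [Xy Wy]; split; first exact: sgB.
  by rewrite raddfB; apply: sgB.
have hW0 : is_subgroup W0.
  split; first by exists 0, 0; rewrite raddf0 addr0; split; [apply: sg0|split; [apply: sg0|]].
  move=> a b [x [w [Xx [Ww ->]]]] [x' [w' [Xx' [Ww' ->]]]].
  exists (x - x'), (w - w'); split; first exact: sgB.
  split; first exact: sgB.
  by rewrite raddfB opprD !addrA; congr (_ + _); rewrite -!addrA; congr (_ + _); rewrite addrC.
have WW0 : forall y, W y -> W0 y.
  by move=> y Wy; exists 0, y; rewrite raddf0 add0r; split; [apply: sg0|].
have Wtr : forall a b c, W (a - c) -> W (b - c) -> W (a - b).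
  by move=> a b c; apply: sg_tr.
have key : forall g : {additive G -> G}, quot_card_le (imageset g X0) W0 n.+1.
  move=> g; apply: NNPP => hg.
  have W0sym : forall a b, W0 (a - b) -> W0 (b - a) by move=> a b; apply: sg_sym.
  have [[s1 [hs1 cs1]]|[Z [hZ [AZ pZ]]]] := greedy (imageset g X0) W0sym n.+1.
    by apply: hg; exists s1.
  have cl : forall v : {additive G -> G}, (forall x, X0 x -> W (v x - g x)) ->
      forall y, imageset v X y -> exists i, (i < size Z)%N /\ W (y - nth 0 Z i).
    move=> v hv y Iy; apply: NNPP => hy.
    have nW : forall i, (i < size Z)%N -> ~ W (y - nth 0 Z i).
      by move=> i hi hW'; apply: hy; exists i.
    have [s [hs cs]] := hc v.
    have := @PH _ _ Wtr (y :: Z) s.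
    have -> : size (y :: Z) = n.+3 by rewrite /= hZ.
    move=> H; suff : (n.+3 <= n.+2)%N by rewrite ltnn.
    apply: (leq_trans _ hs); apply: H.
    - move=> [|i] [|j] //= hi hj.
      + move=> h; exfalso; apply: (nW j) => //; by rewrite hZ.
      + move=> /Wsym h; exfalso; apply: (nW i) => //; by rewrite hZ.
      + by move=> h; congr S; apply: pZ; rewrite ?hZ //; apply: WW0.
    move=> x; rewrite inE => /orP [/eqP ->|xZ]; first exact: cs.
    have [a [[Xa Wa] ->]] := AZ x xZ.
    have [t [ts ht]] := cs (v a) (ex_intro _ a (conj Xa erefl)).
    exists t; split => //; apply: (sg_tr2 hW _ ht).
    exact: (sg_sym hW (hv a (conj Xa Wa))).
  have hg' : forall x, X0 x -> W (g x - g x) by move=> x _; rewrite subrr; apply: sg0.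
  have hh : forall x, X0 x -> W ((u0 \+ g) x - g x) by move=> x [_ Wx]; rewrite /= addrK.
  have allW : forall c, X c -> W (u0 c).
    move=> c Xc.
    have [i [hi Wi]] := cl _ hh ((u0 \+ g) c) (ex_intro _ c (conj Xc erefl)).
    have [j [hj Wj]] := cl _ hg' (g c) (ex_intro _ c (conj Xc erefl)).
    have e : W (u0 c - (Z`_i - Z`_j)).
      rewrite (alg1 _ (g c)); exact: sgB.
    have e0 : W0 (Z`_i - Z`_j).
      rewrite -(alg2 (u0 c) (Z`_i - Z`_j)); apply: sgB => //; last exact: WW0.
      by exists c, 0; rewrite addr0; split => //; split => //; apply: sg0.
    have ij := pZ _ _ hi hj e0; subst j.
    by move: e; rewrite subrr subr0.
  have h0 : (0 < size L0)%N by rewrite hL0.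
  have h1 : (1 < size L0)%N by rewrite hL0.
  have [a [Xa ea]] := AL0 _ (mem_nth 0 h0).
  have [b [Xb eb]] := AL0 _ (mem_nth 0 h1).
  have := pL0 _ _ h0 h1; rewrite ea eb => H; have := H (sgB hW (allW _ Xa) (allW _ Xb)).
  by [].
have [X' [W' [hX' X'X0 fX0X' [hW' W0W' fW'W0 hu]]]] := IH X0 W0 hX0 hW0 key.
exists X', W'; split => //.
- by move=> x /X'X0 [].
- have qXX0 : quot_card_le X X0 n.+2.
    have X0sym : forall a b, X0 (a - b) -> X0 (b - a) by move=> a b; apply: sg_sym.
    have [[s [hs cs]]|[L [hL [AL pL]]]] := greedy X X0sym n.+2.
      by exists s; split.
    exfalso; have [s [hs cs]] := hc u0.
    have := @PH _ _ Wtr [seq u0 x | x <- L] s.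
    rewrite size_map hL => H; suff : (n.+3 <= n.+2)%N by rewrite ltnn.
    apply: (leq_trans _ hs); apply: H.
    + move=> i j hi hj; rewrite !(nth_map 0) ?hL // -raddfB => hWij.
      apply: pL; rewrite ?hL //; split => //; apply: sgB => //; apply: AL; by apply: mem_nth; rewrite hL.
    + move=> x /mapP [a aL ->]; apply: cs; exists a; split => //; exact: AL.
  case: fX0X' => k hk; exists (n.+2 * k)%N; exact: qtrans qXX0 hk.
- split => //.
  + by move=> x Wx; apply: W0W'; apply: WW0.
  + have qW0W : quot_card_le W0 W n.+2.
      have [s [hs cs]] := hc u0; exists s; split => // y [x [w [Xx [Ww ->]]]].
      have [t [ts ht]] := cs (u0 x) (ex_intro _ x (conj Xx erefl)).
      by exists t; split => //; rewrite addrAC; apply: sgD.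
    case: fW'W0 => k hk; exists (k * n.+2)%N; exact: qtrans hk qW0W.
Qed.

Theorem theorem2p4 (G : zmodType) (H : G -> Prop)
  (hH : is_subgroup H) (hU : uniformly_fully_inert H) :
  exists F : G -> Prop, is_subgroup F /\ fully_invariant F /\ commensurable H F.
Proof.
case: hU => [[|n] [// _ hm]].
have hc : forall u : {additive G -> G}, quot_card_le (imageset u H) H n.+1.
  move=> u; have [s [hs cs]] := hm u; exists s; split => // x Ix; apply: cs.
  by exists x, 0; split => //; split; [apply: sg0|rewrite addr0].
have [X' [W' [hX' X'H fHX' [hW' HW' fW'H hu]]]] := main hH hH hc.
pose F := fun y => forall u : {additive G -> G}, W' (u y).
have hF : is_subgroup F.
  split; first by move=> u; rewrite raddf0; apply: sg0.
  by move=> x y Fx Fy u; rewrite raddfB; apply: sgB.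
exists F; split => //; split.
  by move=> phi x Fx u; exact: (Fx (u \o phi)).
split.
  case: fW'H => k [t [ht ct]]; exists k, t; split => // z [a [b [Ha [Fb ->]]]].
  apply: ct; apply: sgD => //; first exact: HW'; exact: (Fb idfun).
case: fHX' => k [s [hs cs]]; exists k, s; split => // z [a [b [Ha [Fb ->]]]].
have [y [ys hy]] := cs a Ha; exists y; split => //.
rewrite addrAC; apply: (sgD hF _ Fb) => u; exact: hu.
Qed.
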